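(* The class of coherent sober spaces is projective: if $(p_{ij}\colon X_j\to X_i)_{i\sqsubseteq j\in I}$ is a projective system of topological spaces in which every $X_i$ is coherent and sober, then every projective limit of this system in the category of topological spaces is coherent and sober.
   Context: A projective system of topological spaces consists of a directed preordered set $(I,\sqsubseteq)$, spaces $X_i$ and continuous maps $p_{ij}\colon X_j\to X_i$ for $i\sqsubseteq j$ with $p_{ii}=\mathrm{id}$ and $p_{ij}\circ p_{jk}=p_{ik}$; its projective limit is its limit in the category of topological spaces (canonically, the subspace of $\prod_i X_i$ of tuples $\vec x$ with $p_{ij}(x_j)=x_i$ for all $i\sqsubseteq j$). A subset is saturated if it equals the intersection of its open neighbourhoods (equivalently, it is upward closed in the specialization preorder $x\le y$ iff every open neighbourhood of $x$ contains $y$). Compactness assumes no separation axiom. A space is coherent if the intersection of any two compact saturated subsets is compact. A space is sober if it is $T_0$ and every irreducible closed subset (non-empty closed set not contained in the union of two closed sets unless contained in one of them) is the closure of a single point. *)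

(* Defs.v *)
From HB Require Import structures.
From mathcomp Require Import all_boot all_order.
From mathcomp Require Import boolp classical_sets topology.
Set Implicit Arguments. Unset Strict Implicit. Unset Printing Implicit Defensive.
Local Open Scope classical_set_scope.

Definition saturated (T : topologicalType) (A : set T) : Prop :=
  A = \bigcap_(U in [set U : set T | open U /\ A `<=` U]) U.

Definition coherent (T : topologicalType) : Prop :=
  forall A B : set T, compact A -> saturated A -> compact B -> saturated B ->
    compact (A `&` B).

Definition irreducible_closed (T : topologicalType) (F : set T) : Prop :=
  [/\ closed F, F !=set0 &
    forall F1 F2 : set T, closed F1 -> closed F2 -> F `<=` F1 `|` F2 ->
      F `<=` F1 \/ F `<=` F2].

Definition sober (T : topologicalType) : Prop :=
  @kolmogorov_space T /\
  forall F : set T, irreducible_closed F -> exists x : T, F = closure [set x].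

Definition directed_preorder (I : Type) (le : I -> I -> Prop) : Prop :=
  [/\ (forall i, le i i),
      (forall i j k, le i j -> le j k -> le i k),
      inhabited I &
      (forall i j, exists k, le i k /\ le j k)].

Definition projective_system (I : Type) (le : I -> I -> Prop)
  (X : I -> topologicalType) (p : forall i j, le i j -> X j -> X i) : Prop :=
  [/\ (forall i j (h : le i j), continuous (p i j h)),
      (forall i (h : le i i) (x : X i), p i i h x = x) &
      (forall i j k (hij : le i j) (hjk : le j k) (hik : le i k) (x : X k),
          p i j hij (p j k hjk x) = p i k hik x)].

Definition is_cone (I : Type) (le : I -> I -> Prop)
  (X : I -> topologicalType) (p : forall i j, le i j -> X j -> X i)
  (L : topologicalType) (q : forall i, L -> X i) : Prop :=
  (forall i, continuous (q i)) /\
  (forall i j (h : le i j) (x : L), p i j h (q j x) = q i x).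

Definition is_projective_limit (I : Type) (le : I -> I -> Prop)
  (X : I -> topologicalType) (p : forall i j, le i j -> X j -> X i)
  (L : topologicalType) (q : forall i, L -> X i) : Prop :=
  is_cone p q /\
  forall (Z : topologicalType) (r : forall i, Z -> X i), is_cone p r ->
    exists f : Z -> L, [/\ continuous f, (forall i z, q i (f z) = r i z) &
      forall g : Z -> L, continuous g -> (forall i z, q i (g z) = r i z) ->
        forall z, g z = f z].

(* Main.v *)
Require Import Defs.
From HB Require Import structures.
From mathcomp Require Import all_boot all_order.
From mathcomp Require Import boolp classical_sets topology.

Module Aux.
Set Implicit Arguments. Unset Strict Implicit. Unset Printing Implicit Defensive.
Local Open Scope classical_set_scope.

Lemma compact_filtered (T : topologicalType) (Q : set T) (B : set (set T)) :
  compact Q -> B !=set0 ->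
  (forall b1 b2, B b1 -> B b2 -> exists2 b3, B b3 & b3 `<=` b1 `&` b2) ->
  (forall b, B b -> (b `&` Q) !=set0) ->
  exists y, Q y /\ forall b, B b -> closure b y.
Proof.
move=> cQ [b0 Bb0] Bfil BQ.
have FF : Filter (filter_from B (fun b => b `&` Q)).
  apply: filter_from_filter; first by exists b0.
  move=> i j Bi Bj; have [k Bk sk] := Bfil _ _ Bi Bj.
  by exists k => // x [/sk [? ?] ?].
have PF : ProperFilter (filter_from B (fun b => b `&` Q)).
  by apply: filter_from_proper.
have [y [Qy cy]] := cQ _ PF (ex_intro2 _ _ b0 Bb0 (fun x (h : (b0 `&` Q) x) => h.2)).
exists y; split => // b Bb N Ny.
have [z [[bz Qz] Nz]] := cy (b `&` Q) N (ex_intro2 _ _ b Bb (fun x h => h)) Ny.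
by exists z.
Qed.

Lemma closure_image_cont (S T : topologicalType) (f : S -> T) (A : set S) x :
  continuous f -> closure A x -> closure (f @` A) (f x).
Proof.
move=> fc cx N Nfx.
have : nbhs x (f @^-1` N) by exact: fc.
move=> /cx [y [Ay Ny]]; exists (f y); split => //; by exists y.
Qed.

Lemma closed_sub_closure (T : topologicalType) (A C : set T) :
  closed C -> A `<=` C -> closure A `<=` C.
Proof. by move=> cC AC; rewrite (closure_id C).1 //; exact: closureS. Qed.

Lemma closure1_open (T : topologicalType) (U : set T) (x y : T) :
  open U -> U y -> closure [set x] y -> U x.
Proof.
move=> oU Uy cy; have [z [zx Uz]] := cy U (open_nbhs_nbhs (conj oU Uy)).
by rewrite -zx.
Qed.

Lemma closure_closedS (T : topologicalType) (C : set T) :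
  closed C -> closure C `<=` C.
Proof. by move=> cC; apply: closed_sub_closure cC (fun _ h => h). Qed.

Definition satur (T : topologicalType) (S : set T) :=
  \bigcap_(U in [set U : set T | open U /\ S `<=` U]) U.

Lemma sub_satur (T : topologicalType) (S : set T) : S `<=` satur S.
Proof. by move=> x Sx U [_ SU]; apply: SU. Qed.

Lemma satur_sub_open (T : topologicalType) (S U : set T) :
  open U -> S `<=` U -> satur S `<=` U.
Proof. by move=> oU SU x; apply; split. Qed.

Lemma satur_saturated (T : topologicalType) (S : set T) : saturated (satur S).
Proof.
rewrite /saturated; apply/seteqP; split => x.
  by move=> Sx U [oU SU]; apply: SU.
move=> H U [oU SU]; apply: H; split => //.
exact: satur_sub_open.
Qed.

Lemma saturatedI (T : topologicalType) (A B : set T) :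
  saturated A -> saturated B -> saturated (A `&` B).
Proof.
move=> sA sB; rewrite /saturated; apply/seteqP; split => x.
  by move=> ABx U [oU SU]; apply: SU.
move=> H; split.
  rewrite sA => U [oU AU]; apply: H; split => // y [Ay _]; exact: AU.
rewrite sB => U [oU BU]; apply: H; split => // y [_ By]; exact: BU.
Qed.

Lemma satur_up (T : topologicalType) (S : set T) e :
  satur S e -> exists2 s, S s & closure [set e] s.
Proof.
move=> Se; apply: contrapT => H.
pose W := \bigcup_(B in [set B : set T | open B /\ ~ B e]) B.
have oW : open W by apply: bigcup_open => B [].
have SW : S `<=` W.
  move=> s Ss; have : ~ closure [set e] s by move=> c; apply: H; exists s.
  move=> /existsNP [B /existsNP [nB /=]] nBe.
  move: nB; rewrite nbhsE => -[C [oC Cs] CB].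
  exists C => //; split => // Ce; apply: nBe; exists e; split => //; exact: CB.
have := Se W (conj oW SW).
by move=> [B [_ nBe] Be].
Qed.

Lemma satur_compact (T : topologicalType) (S : set T) :
  compact S -> compact (satur S).
Proof.
move=> cS F PF FS.
pose down (E : set T) := [set s | exists2 e, E e & closure [set e] s].
have [s [Ss Hs]] : exists s, S s /\ forall b,
    [set b | exists E, F E /\ b = down E] b -> closure b s.
  apply: compact_filtered cS _ _ _.
  - by exists (down setT); exists setT; split => //; exact: filterT.
  - move=> _ _ [E1 [FE1 ->]] [E2 [FE2 ->]]; exists (down (E1 `&` E2)).
      by exists (E1 `&` E2); split => //; exact: filterI.
    by move=> y [e [E1e E2e] ce]; split; exists e.
  - move=> _ [E [FE ->]].
    have [e [Ee Se]] := filter_ex (filterI FE FS).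
    have [s Ss ce] := satur_up Se.
    by exists s; split => //; exists e.
exists s; split; first exact: sub_satur.
move=> E N FE; rewrite nbhsE => -[W [oW Ws] WN].
have [t [[e Ee ce] Wt]] := Hs (down E) (ex_intro _ E (conj FE erefl)) W
  (open_nbhs_nbhs (conj oW Ws)).
have We := closure1_open oW Wt ce.
by exists e; split => //; exact: WN.
Qed.

Lemma closed_forall (T : topologicalType) (J : Type) (f : J -> set T) :
  (forall j, closed (f j)) -> closed [set y | forall j, f j y].
Proof.
move=> cf; have := closed_bigI (D := setT) (fun j _ => cf j).
suff -> : \bigcap_(j in setT) f j = [set y | forall j, f j y] by [].
by apply/seteqP; split => y /= H j; [apply: H|move=> _; apply: H].
Qed.

Lemma kol_eq (T : topologicalType) (x y : T) : kolmogorov_space T ->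
  closure [set x] y -> closure [set y] x -> x = y.
Proof.
move=> k cy cx; apply/eqP/negPn/negP => /k [A [[]|[]]].
- rewrite !inE /= => Ax nAy. have [z [zy Az]] := cx A Ax. by apply: nAy; rewrite -zy.
- rewrite !inE /= => Ay nAx. have [z [zx Az]] := cy A Ay. by apply: nAx; rewrite -zx.
Qed.

Section Key.
Unset Implicit Arguments.
Variables (I : Type) (le : I -> I -> Prop) (X : I -> topologicalType)
  (p : forall i j, le i j -> X j -> X i).
Hypothesis dir : directed_preorder le.
Hypothesis ps : projective_system p.
Hypothesis sX : forall i, sober (X i).
Variables (L : topologicalType) (q : forall i, L -> X i).
Hypothesis qc : forall i, continuous (q i).
Hypothesis qp : forall i j (h : le i j) x, p i j h (q j x) = q i x.
Hypothesis qsurj : forall xs : forall i, X i,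
  (forall i j (h : le i j), p i j h (xs j) = xs i) -> exists x, forall i, q i x = xs i.
Hypothesis qbase : forall A, open A -> forall x, A x ->
  exists i U, [/\ open U, U (q i x) & q i @^-1` U `<=` A].

Set Implicit Arguments.
Lemma pcont i j (h : le i j) : continuous (p i j h).
Proof. by case: ps. Qed.
Lemma pid i (h : le i i) x : p i i h x = x.
Proof. by case: ps. Qed.
Lemma pcomp i j k (hij : le i j) (hjk : le j k) (hik : le i k) x :
  p i j hij (p j k hjk x) = p i k hik x.
Proof. by case: ps => _ _; apply. Qed.
Lemma ltrans i j k : le i j -> le j k -> le i k.
Proof. by case: dir => _ t _ _; apply: t. Qed.
Lemma lrefl i : le i i.
Proof. by case: dir. Qed.
Lemma updir i j : exists k, le i k /\ le j k.
Proof. by case: dir => _ _ _; apply. Qed.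

Unset Implicit Arguments.
Variables (Q : forall i, set (X i)).
Hypothesis hQc : forall i, compact (Q i).
Hypothesis hQs : forall i, saturated (Q i).
Hypothesis hQp : forall i j (h : le i j) y, Q j y -> Q i (p i j h y).

Set Implicit Arguments.
Lemma key_compact : compact [set x | forall i, Q i (q i x)].
Proof.
move=> G PG GP.
pose Cl i := \bigcap_(S in G) closure (q i @` S).
have Clc i : closed (Cl i) by apply: closed_bigI => S _; exact: closed_closure.
have Clp i j (h : le i j) : p i j h @` Cl j `<=` Cl i.
  move=> _ [y Cly <-] S GS.
  have := closure_image_cont (@pcont _ _ h) (Cly S GS).
  apply: closureS => _ [_ [x Sx <-] <-]; exists x => //; exact: qp.
pose good (C : forall i, set (X i)) := [/\ forall i, closed (C i),
   forall i, C i `<=` Cl i, forall i, (C i `&` Q i) !=set0 &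
   forall i j (h : le i j), p i j h @` C j `<=` C i].
have goodCl : good Cl.
  split; [exact: Clc|by move=> ? ? ?| move=> i|exact: Clp].
  suff [y [Qy Hy]] : exists y, Q i y /\ forall b,
     [set b | exists S, G S /\ b = q i @` S] b -> closure b y.
    by exists y; split => // S GS; apply: Hy; exists S.
  apply: compact_filtered (hQc i) _ _ _.
  - exists (q i @` setT); exists setT; split; [exact: filterT|by []].
  - move=> _ _ [S1 [GS1 ->]] [S2 [GS2 ->]]; exists (q i @` (S1 `&` S2)).
      by exists (S1 `&` S2); split => //; exact: filterI.
    by move=> _ [x [? ?] <-]; split; exists x.
  - move=> _ [S [GS ->]].
    have [x [Sx Px]] := filter_ex (filterI GS GP).
    by exists (q i x); split => //; exists x.
pose T := {C : forall i, set (X i) | good C}.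
pose R := fun a b : T => `[< forall i, sval b i `<=` sval a i >].
have [[C gC] Cmax] : exists t : T, premaximal R t.
  apply: (ZL_preorder (exist _ Cl goodCl)).
  - by move=> t; apply/asboolP => i x.
  - move=> a b c /asboolP ab /asboolP bc; apply/asboolP => i x /bc /ab; done.
  - move=> A Atot.
    pose D i := Cl i `&` \bigcap_(c in A) sval c i.
    have gD : good D.
      rewrite /D; split.
      - move=> i; apply: closedI; first exact: Clc.
        by apply: closed_bigI => c _; have [] := svalP c.
      - by move=> i y [].
      - move=> i.
        suff [y [Qy Hy]] : exists y, Q i y /\ forall b,
           [set b | b = Cl i \/ exists2 c, A c & b = sval c i] b -> closure b y.
          exists y; split => //; split.
            by apply: (closure_closedS (Clc i)); apply: Hy; left.
          move=> c Ac; have [cc _ _ _] := svalP c.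
          by apply: (closure_closedS (cc i)); apply: Hy; right; exists c.
        apply: compact_filtered (hQc i) _ _ _.
        + by exists (Cl i); left.
        + move=> b1 b2 [->|[c1 Ac1 ->]] [->|[c2 Ac2 ->]].
          * by exists (Cl i); [left|move=> y ?].
          * exists (sval c2 i); [by right; exists c2|move=> y ?; split => //].
            by have [_ cs _ _] := svalP c2; apply: cs.
          * exists (sval c1 i); [by right; exists c1|move=> y ?; split => //].
            by have [_ cs _ _] := svalP c1; apply: cs.
          * have [/asboolP r|/asboolP r] := Atot _ _ Ac1 Ac2.
              by exists (sval c2 i); [right; exists c2|move=> y ?; split => //; apply: r].
            by exists (sval c1 i); [right; exists c1|move=> y ?; split => //; apply: r].
        + move=> b [->|[c Ac ->]].
            by have [_ _ cq _] := goodCl.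
          by have [_ _ cq _] := svalP c.
      - move=> i j h _ [y [Cly Ay] <-]; split; first by apply: (Clp i j h); exists y.
        move=> c Ac; have [_ _ _ cp] := svalP c; apply: (cp i j h); exists y => //.
        exact: Ay.
    by exists (exist _ D gD) => s As; apply/asboolP => i y [_ H]; exact: H s As.
have minimal : forall D, good D -> (forall i, D i `<=` C i) -> forall i, C i `<=` D i.
  move=> D gD DC; have := Cmax (exist _ D gD).
  by move=> H; apply/asboolP; apply: H; apply/asboolP.
have [Cc CCl CQ Cp] := gC.
have keymin : forall i (F : set (X i)), closed F ->
   (forall m (h : le i m), exists y, [/\ C m y, Q m y & F (p i m h y)]) ->
   forall m (h : le i m), C i `<=` closure (p i m h @` (C m `&` p i m h @^-1` F)).
  move=> i F cF HF.
  pose S k m (h1 : le i m) (h2 : le k m) :=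
    closure (p k m h2 @` (C m `&` p i m h1 @^-1` F)).
  have Smono : forall k m m' h1 h2 h1' h2' (hm : le m m'),
      S k m' h1' h2' `<=` S k m h1 h2.
    move=> k m m' h1 h2 h1' h2' hm; apply: closureS => _ [z [Cz Fz] <-].
    exists (p m m' hm z); last exact: pcomp.
    split; first by apply: (Cp m m' hm); exists z.
    by rewrite /= pcomp.
  pose D k := C k `&` [set y | forall m h1 h2, S k m h1 h2 y].
  have gD : good D.
    rewrite /D; split.
    - move=> k; apply: closedI; first exact: Cc.
      apply: closed_forall => m; apply: closed_forall => h1.
      apply: closed_forall => h2; exact: closed_closure.
    - by move=> k y [Cy _]; apply: CCl.
    - move=> k.
      suff [y [Qy Hy]] : exists y, Q k y /\ forall b,
         [set b | exists m h1 h2, b = S k m h1 h2] b -> closure b y.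
        have [m [h1 h2]] := updir i k.
        exists y; split => //; split.
          apply: (closed_sub_closure (Cc k)) (Hy _ (ex_intro _ m (ex_intro _ h1 (ex_intro _ h2 erefl)))).
          apply: closed_sub_closure (Cc k) _ => _ [z [Cz _] <-].
          by apply: (Cp k m h2); exists z.
        move=> m' h1' h2'; rewrite /S.
        have := Hy (S k m' h1' h2'); rewrite /S => H.
        refine (closure_closedS (@closed_closure _ _) (H _)).
        by exists m', h1', h2'.
      apply: compact_filtered (hQc k) _ _ _.
      + have [m [h1 h2]] := updir i k.
        by exists (S k m h1 h2); exists m, h1, h2.
      + move=> _ _ [m1 [h11 [h21 ->]]] [m2 [h12 [h22 ->]]].
        have [m3 [a b]] := updir m1 m2.
        exists (S k m3 (ltrans h11 a) (ltrans h21 a)).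
          by exists m3, (ltrans h11 a), (ltrans h21 a).
        move=> y Sy; split.
          exact: (Smono k m1 m3 h11 h21 _ _ a y Sy).
        exact: (Smono k m2 m3 h12 h22 _ _ b y Sy).
      + move=> _ [m [h1 [h2 ->]]]; have [y [Cy Qy Fy]] := HF m h1.
        exists (p k m h2 y); split; last exact: hQp.
        by apply: subset_closure; exists y.
    - move=> k j h _ [y [Cy Hy] <-]; split; first by apply: (Cp k j h); exists y.
      move=> m h1 h2; have [m' [a b]] := updir m j.
      have hi' : le i m' := ltrans h1 a.
      have hk' : le k m' := ltrans h2 a.
      apply: (Smono k m m' h1 h2 hi' hk' a).
      have := closure_image_cont (@pcont _ _ h) (Hy m' hi' b).
      apply: closureS => _ [_ [z Hz <-] <-]; exists z => //; by rewrite pcomp.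
  have CD := minimal D gD (fun k y Dy => Dy.1).
  move=> m0 hh y0 Cy0; have [_ HD] := CD i y0 Cy0; exact: (HD m0 hh hh).
have Cirr : forall i, irreducible_closed (C i).
  move=> i; split; first exact: Cc.
    by have [y [Cy _]] := CQ i; exists y.
  move=> F1 F2 c1 c2 sub.
  have [H|H] : (forall m (h : le i m), exists y, [/\ C m y, Q m y & F1 (p i m h y)]) \/
        (forall m (h : le i m), exists y, [/\ C m y, Q m y & F2 (p i m h y)]).
    case: (pselect (forall m (h : le i m), exists y, [/\ C m y, Q m y & F1 (p i m h y)])) => [H|H].
      by left.
    right; move=> m h.
    move/existsNP: H => [m1 /existsNP [h1 /forallNP H1]].
    apply: contrapT => /forallNP H2.
    have [m3 [a b]] := updir m1 m.
    have [y [Cy Qy]] := CQ m3.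
    have hi3 : le i m3 := ltrans h1 a.
    have : C i (p i m3 hi3 y) by apply: (Cp i m3 hi3); exists y.
    move/sub => [F1y|F2y].
      apply: (H1 (p m1 m3 a y)); split.
      - by apply: (Cp m1 m3 a); exists y.
      - exact: hQp.
      - by rewrite pcomp.
    apply: (H2 (p m m3 b y)); split.
    - by apply: (Cp m m3 b); exists y.
    - exact: hQp.
    - by rewrite pcomp.
  - left; apply: subset_trans (keymin i F1 c1 H i (lrefl i)) _.
    by apply: closed_sub_closure c1 _ => _ [z [_ Fz] <-].
  - right; apply: subset_trans (keymin i F2 c2 H i (lrefl i)) _.
    by apply: closed_sub_closure c2 _ => _ [z [_ Fz] <-].
pose xs i := projT1 (cid ((sX i).2 _ (Cirr i))).
have xsE i : C i = closure [set xs i] := projT2 (cid ((sX i).2 _ (Cirr i))).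
have xsC i : C i (xs i) by rewrite xsE; apply: subset_closure.
have thread : forall i j (h : le i j), p i j h (xs j) = xs i.
  move=> i j h; apply: (kol_eq (sX i).1).
    have HT : forall m (hm : le i m), exists y,
        [/\ C m y, Q m y & [set: X i] (p i m hm y)].
      by move=> m hm; have [y [Cy Qy]] := CQ m; exists y.
    have := keymin i setT closedT HT j h (xs i) (xsC i).
    move=> H; apply: (closed_sub_closure (@closed_closure _ _) _ H).
    move=> _ [z [Cz _] <-].
    rewrite xsE in Cz.
    have := closure_image_cont (@pcont _ _ h) Cz.
    by apply: closureS => _ [_ -> <-].
  by rewrite -xsE; apply: (Cp i j h); exists (xs j).
have [x qx] := qsurj xs thread.
exists x; split.
  move=> i; rewrite qx.
  have [y [Cy Qy]] := CQ i.
  rewrite xsE in Cy.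
  rewrite (hQs i) => U [oU QU].
  exact: closure1_open oU (QU y Qy) Cy.
move=> S N GS; rewrite nbhsE => -[A [oA Ax] AN].
have [i [U [oU Ux sub]]] := qbase A oA x Ax.
have : closure (q i @` S) (q i x) by rewrite qx; exact: (CCl i _ (xsC i) S GS).
move=> /(_ U (open_nbhs_nbhs (conj oU Ux))) [_ [[s Ss <-] Us]].
by exists s; split => //; apply: AN; apply: sub.
Qed.
End Key.

Section Main.
Unset Implicit Arguments.
Variables (I : Type) (le : I -> I -> Prop) (X : I -> topologicalType)
  (p : forall i j, le i j -> X j -> X i).
Hypothesis dir : directed_preorder le.
Hypothesis ps : projective_system p.
Hypothesis cX : forall i, coherent (X i) /\ sober (X i).
Variables (L : topologicalType) (q : forall i, L -> X i).
Hypothesis qc : forall i, continuous (q i).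
Hypothesis qp : forall i j (h : le i j) x, p i j h (q j x) = q i x.
Hypothesis qinj : forall x y, (forall i, q i x = q i y) -> x = y.
Hypothesis qsurj : forall xs : forall i, X i,
  (forall i j (h : le i j), p i j h (xs j) = xs i) -> exists x, forall i, q i x = xs i.
Hypothesis qbase : forall A, open A -> forall x, A x ->
  exists i U, [/\ open U, U (q i x) & q i @^-1` U `<=` A].
Set Implicit Arguments.

Lemma sX i : sober (X i). Proof. exact: (cX i).2. Qed.

Lemma L_sober : sober L.
Proof.
split.
  move=> x y xy.
  case: (pselect (exists i, q i x != q i y)) => [[i qi]|H]; last first.
    exfalso; move/eqP: xy; apply; apply: qinj => i; apply/eqP.
    by apply/negPn/negP => ne; apply: H; exists i.
  have [A [[Ax nAy]|[Ay nAx]]] := (sX i).1 _ _ qi.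
    exists (q i @^-1` A); left; rewrite !inE in Ax nAy *; split => //.
    exact: (qc i x _ Ax).
  exists (q i @^-1` A); right; rewrite !inE in Ay nAx *; split => //.
  exact: (qc i y _ Ay).
move=> F [cF [f0 Ff0] irrF].
pose Fi i := closure (q i @` F).
have Firr i : irreducible_closed (Fi i).
  split; first exact: closed_closure.
    by exists (q i f0); apply: subset_closure; exists f0.
  move=> F1 F2 c1 c2 sub.
  have : F `<=` q i @^-1` F1 `|` q i @^-1` F2.
    by move=> y Fy; apply: sub; apply: subset_closure; exists y.
  move/irrF.
  case=> [||H|H].
  - exact: preimage_closed (fun x _ => qc i x) c1.
  - exact: preimage_closed (fun x _ => qc i x) c2.
  - by left; apply: closed_sub_closure c1 _ => _ [y Fy <-]; exact: H.
  - by right; apply: closed_sub_closure c2 _ => _ [y Fy <-]; exact: H.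
pose xs i := projT1 (cid ((sX i).2 _ (Firr i))).
have xsE i : Fi i = closure [set xs i] := projT2 (cid ((sX i).2 _ (Firr i))).
have xsF i : Fi i (xs i) by rewrite xsE; apply: subset_closure.
have thread : forall i j (h : le i j), p i j h (xs j) = xs i.
  move=> i j h; apply: (kol_eq (sX i).1).
    have := xsF i; rewrite /Fi => H.
    apply: (closed_sub_closure (@closed_closure _ _) _ H).
    move=> _ [f Ff <-]; rewrite -(qp i j h).
    have : Fi j (q j f) by apply: subset_closure; exists f.
    rewrite xsE => /(closure_image_cont (@pcont _ _ _ _ ps _ _ h)).
    by apply: closureS => _ [_ -> <-].
  rewrite -xsE; have := closure_image_cont (@pcont _ _ _ _ ps _ _ h) (xsF j).
  by apply: closureS => _ [_ [f Ff <-] <-]; exists f => //; rewrite qp.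
have [x qx] := qsurj xs thread.
exists x; apply/seteqP; split.
  move=> y Fy B; rewrite nbhsE => -[A [oA Ay] AB].
  have [i [U [oU Uy sub]]] := qbase A oA y Ay.
  have : Fi i (q i y) by apply: subset_closure; exists y.
  rewrite xsE => /(closure1_open oU Uy) Ux.
  by exists x; split => //; apply: AB; apply: sub; rewrite /= qx.
apply: (closed_sub_closure cF) => _ ->.
apply: contrapT => nFx.
have [i [U [oU Ux sub]]] := qbase _ (closed_openC cF) x nFx.
have := xsF i; rewrite -qx => /(_ U (open_nbhs_nbhs (conj oU Ux))).
by move=> [_ [[f Ff <-] Uf]]; apply: (sub f Uf).
Qed.
Lemma red_sat K : compact K -> saturated K ->
  K = [set x | forall i, satur (q i @` K) (q i x)].
Proof.
move=> cK sK; apply/seteqP; split.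
  by move=> x Kx i; apply: sub_satur; exists x.
move=> x Hx; apply: contrapT => nKx.
have [W [oW KW] nWx] : exists2 W, open W /\ K `<=` W & ~ W x.
  move: nKx; rewrite {1}sK => /existsNP [W] /not_implyP [HW nWx].
  by exists W.
have [k [V [oV KV VW]]] : exists k V, [/\ open V, K `<=` q k @^-1` V & q k @^-1` V `<=` W].
  apply: contrapT => Hn.
  suff [y [Ky Hy]] : exists y, K y /\ forall b,
      [set b | exists k V, [/\ open V, q k @^-1` V `<=` W & b = ~` (q k @^-1` V)]] b ->
      closure b y.
    have [k [U [oU Uy sub]]] := qbase W oW y (KW y Ky).
    have := Hy (~` (q k @^-1` U)) (ex_intro _ k (ex_intro _ U (And3 oU sub erefl))).
    move=> /(_ (q k @^-1` U)) [].
      apply: open_nbhs_nbhs; split => //.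
      exact: (continuousP _).1 (qc k) _ oU.
    by move=> z [nz Uz].
  apply: compact_filtered cK _ _ _.
  - have [i0] : inhabited I by case: dir.
    exists (~` (q i0 @^-1` set0)); exists i0, set0; split => //; first exact: open0.
  - move=> _ _ [k1 [V1 [oV1 s1 ->]]] [k2 [V2 [oV2 s2 ->]]].
    have [k [a b]] := updir dir k1 k2.
    exists (~` (q k @^-1` (p k1 k a @^-1` V1 `|` p k2 k b @^-1` V2))).
      exists k, (p k1 k a @^-1` V1 `|` p k2 k b @^-1` V2); split => //.
        apply: openU.
          exact: (continuousP _).1 (@pcont _ _ _ _ ps _ _ a) _ oV1.
        exact: (continuousP _).1 (@pcont _ _ _ _ ps _ _ b) _ oV2.
      move=> z [H|H].
        by apply: s1; rewrite /= -(qp _ _ a).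
      by apply: s2; rewrite /= -(qp _ _ b).
    move=> z nz; split => H; apply: nz; [left|right]; by rewrite /= qp.
  - move=> _ [k [V [oV sV ->]]]; apply: contrapT => H; apply: Hn.
    exists k, V; split => // z Kz; apply: contrapT => nz; apply: H.
    by exists z.
apply: nWx; apply: VW; apply: (Hx k V); split => //.
by move=> _ [z Kz <-]; apply: KV.
Qed.

Lemma satur_map K i j (h : le i j) y :
  satur (q j @` K) y -> satur (q i @` K) (p i j h y).
Proof.
move=> Ky U [oU sU]; apply: (Ky (p i j h @^-1` U)); split.
  exact: (continuousP _).1 (@pcont _ _ _ _ ps _ _ h) _ oU.
by move=> _ [z Kz <-]; rewrite /= qp; apply: sU; exists z.
Qed.

Lemma L_coherent : coherent L.
Proof.
move=> A B cA sA cB sB.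
pose Q i := satur (q i @` A) `&` satur (q i @` B).
have -> : A `&` B = [set x | forall i, Q i (q i x)].
  have eA := red_sat cA sA; have eB := red_sat cB sB.
  apply/seteqP; split => x.
    by move=> [Ax Bx] i; split; apply: sub_satur; [exists x|exists x].
  move=> H; split; [rewrite eA|rewrite eB] => i; by case: (H i).
apply: (key_compact dir ps sX qp qsurj qbase (Q:=Q)).
- move=> i; rewrite /Q.
  have cAi : compact (q i @` A).
    exact: (continuous_compact (continuous_subspaceT (qc i)) cA).
  have cBi : compact (q i @` B).
    exact: (continuous_compact (continuous_subspaceT (qc i)) cB).
  have := (cX i).1 (satur (q i @` A)) (satur (q i @` B)).
  apply; [exact: satur_compact|exact: satur_saturated|
          exact: satur_compact|exact: satur_saturated].
- by move=> i; apply: saturatedI; exact: satur_saturated.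
- by move=> i j h y [Ay By]; split; apply: satur_map.
Qed.
End Main.

Section Char.
Unset Implicit Arguments.
Variables (I : Type) (le : I -> I -> Prop) (X : I -> topologicalType)
  (p : forall i j, le i j -> X j -> X i).
Hypothesis dir : directed_preorder le.
Hypothesis ps : projective_system p.
Variables (L : topologicalType) (q : forall i, L -> X i).
Hypothesis lim : is_projective_limit p q.
Set Implicit Arguments.

Definition Zt : Type := L.
HB.instance Definition _ := Choice.on Zt.

Definition opZ (A : set Zt) := forall x, A x ->
  exists i U, [/\ open U, U (q i x) & q i @^-1` U `<=` A].

Lemma qpL i j (h : le i j) x : p i j h (q j x) = q i x.
Proof. by case: lim => [[_ H] _]; apply: H. Qed.

Lemma opZT : opZ setT.
Proof.
move=> x _; have [i0] : inhabited I by case: dir.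
by exists i0, setT; split => //; exact: openT.
Qed.

Lemma opZI : setI_closed opZ.
Proof.
move=> A B oA oB x [Ax Bx].
have [i [U [oU Ux sU]]] := oA x Ax.
have [j [V [oV Vx sV]]] := oB x Bx.
have [k [a b]] := updir dir i j.
exists k, (p i k a @^-1` U `&` p j k b @^-1` V); split.
- apply: openI.
    exact: (continuousP _).1 (@pcont _ _ _ _ ps _ _ a) _ oU.
  exact: (continuousP _).1 (@pcont _ _ _ _ ps _ _ b) _ oV.
- by split; rewrite /= qpL.
- move=> z [Uz Vz]; split; [apply: sU|apply: sV].
    by rewrite /= -(qpL a).
  by rewrite /= -(qpL b).
Qed.

Lemma opZU (J : Type) (f : J -> set Zt) : (forall j, opZ (f j)) -> opZ (\bigcup_j f j).
Proof.
move=> hf x [j _ fx]; have [i [U [oU Ux sU]]] := hf j x fx.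
by exists i, U; split => // z /sU fz; exists j.
Qed.

HB.instance Definition _ := isOpenTopological.Build Zt opZT opZI opZU.

Lemma openZE (A : set Zt) : open A = opZ A.
Proof. by []. Qed.

Lemma qcL i : continuous (q i).
Proof. by case: lim => [[H _] _]; apply: H. Qed.

Lemma qcZ i : continuous (fun z : Zt => q i z).
Proof.
apply/continuousP => U oU; rewrite openZE => x Ux.
by exists i, U; split.
Qed.

Lemma opZ_open (A : set L) : opZ A -> open A.
Proof.
move=> oA; rewrite openE => x Ax; have [i [U [oU Ux sU]]] := oA x Ax.
apply: (filterS sU).
have hU : nbhs (q i x) U by exact: open_nbhs_nbhs.
by have := qcL hU.
Qed.

Lemma qbaseL (A : set L) : open A -> forall x, A x ->
  exists i U, [/\ open U, U (q i x) & q i @^-1` U `<=` A].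
Proof.
have coneZ : is_cone p (fun i (z : Zt) => q i z).
  by split; [exact: qcZ|move=> i j h x; exact: qpL].
have [f [fc fq _]] := lim.2 Zt _ coneZ.
have [g [_ _ gu]] := lim.2 L q lim.1.
have fid : forall x, f x = x.
  have idc : continuous (fun x : L => f (x : Zt)).
    apply/continuousP => A0 oA0; have := (continuousP _).1 fc A0 oA0.
    by rewrite openZE => H; exact: opZ_open H.
  have idc' : continuous (fun x : L => x).
    by apply/continuousP => A0 oA0.
  move=> x; rewrite (gu _ idc (fun i z => fq i z) x).
  exact: esym (gu _ idc' (fun i z => erefl) x).
move=> oA x Ax.
have := (continuousP _).1 fc A oA; rewrite openZE => H.
have : (f @^-1` A) x by rewrite /= fid.
move/H => [i [U [oU Ux sU]]]; exists i, U; split => // z Uz.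
by have := sU z Uz; rewrite /= fid.
Qed.

Lemma qinjL x y : (forall i, q i x = q i y) -> x = y.
Proof.
move=> H.
have cone : is_cone p (fun i (_ : L) => q i x).
  by split; [move=> i; exact: cst_continuous|move=> i j h _; exact: qpL].
have [f [_ _ fu]] := lim.2 L _ cone.
have cx : continuous (fun _ : L => x) by exact: cst_continuous.
have cy : continuous (fun _ : L => y) by exact: cst_continuous.
have e1 := fu (fun _ => x) cx (fun i z => erefl) x.
have e2 := fu (fun _ => y) cy (fun i z => esym (H i)) x.
by rewrite /= in e1 e2; rewrite e1 e2.
Qed.

Lemma qsurjL (xs : forall i, X i) :
  (forall i j (h : le i j), p i j h (xs j) = xs i) -> exists x, forall i, q i x = xs i.
Proof.
move=> th; have [i0] : inhabited I by case: dir.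
have cone : is_cone p (fun i (_ : X i0) => xs i).
  by split; [move=> i; exact: cst_continuous|move=> i j h _; exact: th].
have [f [_ fq _]] := lim.2 (X i0) _ cone.
by exists (f (xs i0)) => i; exact: fq.
Qed.

End Char.

End Aux.
Import Aux.

Theorem theorem4p4 (I : Type) (le : I -> I -> Prop)
  (X : I -> topologicalType) (p : forall i j, le i j -> X j -> X i) :
  directed_preorder le ->
  projective_system p ->
  (forall i, coherent (X i) /\ sober (X i)) ->
  forall (L : topologicalType) (q : forall i, L -> X i),
    is_projective_limit p q -> coherent L /\ sober L.
Proof.
move=> dir ps cX L q lim.
have qc : forall i, continuous (q i) := fun i => @qcL _ _ _ _ _ _ lim i.
have qp : forall i j (h : le i j) x, p i j h (q j x) = q i x.
  exact: (@qpL _ _ _ _ _ _ lim).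
have qinj : forall x y, (forall i, q i x = q i y) -> x = y.
  exact: (@qinjL _ _ _ _ _ _ lim).
have qsurj : forall xs : forall i, X i,
    (forall i j (h : le i j), p i j h (xs j) = xs i) -> exists x, forall i, q i x = xs i.
  exact: (@qsurjL _ _ _ _ dir _ _ lim).
have qbase : forall A, open A -> forall x, A x ->
    exists i U, [/\ open U, U (q i x) & (q i @^-1` U `<=` A)%classic].
  exact: (@qbaseL _ _ _ _ dir ps _ _ lim).
split.
  exact: (@L_coherent _ _ _ _ dir ps cX _ _ qc qp qsurj qbase).
exact: (@L_sober _ _ _ _ ps cX _ _ qc qp qinj qsurj qbase).
Qed.
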